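(* Let $(x_n,v_n)\subset GR$ and assume $(x_n,v_n)\to(x_0,v_0)$ in $TE^N=E^N\times E^N$. Then $x_0\in\Omega$.
   Context: $E=\mathbb R^d$, $d\ge2$; $N$ bodies with masses $m_i>0$; mass inner product $\langle x,y\rangle=\sum_i m_i(x_i,y_i)$ on $E^N$ with norm $\|\cdot\|$; $U(x)=\sum_{i<j}\frac{m_im_j}{|x_i-x_j|}$; $\Omega=\{x\in E^N: x_i\ne x_j,\ i\ne j\}$; Newton's equation $\ddot x=\nabla U(x)$; $T\Omega\simeq\Omega\times E^N$. $L(x,v)=\frac12\|v\|^2+U(x)$, $A_h(\gamma)=\int(L(\gamma,\dot\gamma)+h)dt$, $\phi_h(x,y)$ the infimum of $A_h$ over absolutely continuous curves from $x$ to $y$ on compact intervals. A geodesic ray of energy $h\ge0$ is a curve $\gamma:[0,\infty)\to\Omega$ with $A_h(\gamma|_{[s,t]})=\phi_h(\gamma(s),\gamma(t))$ for all $0\le s<t$ (equivalently, after reparametrization, a ray minimizing for the Jacobi–Maupertuis metric $2(h+U)\langle\cdot,\cdot\rangle$). $GR$ is the set of $(x,v)\in T\Omega$ such that the maximal classical solution of Newton's equation with initial datum $(x,v)$ is a geodesic ray; the energy of the datum is $\frac12\|v\|^2-U(x)$. *)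

(* Defs.v *)
From HB Require Import structures.
From mathcomp Require Import all_boot all_order all_algebra.
From mathcomp Require Import all_classical all_reals all_analysis.
Set Implicit Arguments. Unset Strict Implicit. Unset Printing Implicit Defensive.
Import Order.TTheory GRing.Theory Num.Theory.
Import numFieldNormedType.Exports.
Local Open Scope classical_set_scope.
Local Open Scope ring_scope.

(* A configuration of N bodies in E = R^d : body i, coordinate k. *)
Definition config (R : realType) (N d : nat) := 'I_N -> 'I_d -> R.

Section NBody.
Variables (R : realType) (N d : nat) (m : 'I_N -> R).

Definition edot (a b : 'I_d -> R) : R := \sum_(k < d) a k * b k.
Definition enorm (a : 'I_d -> R) : R := Num.sqrt (edot a a).

Definition mdot (x y : config R N d) : R := \sum_(i < N) m i * edot (x i) (y i).
Definition mnorm (x : config R N d) : R := Num.sqrt (mdot x x).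

Definition Omega : set (config R N d) :=
  [set x | forall i j : 'I_N, i != j -> x i != x j].

Definition dist_ij (x : config R N d) (i j : 'I_N) : R := enorm (fun k => x i k - x j k).

Definition Upot (x : config R N d) : R :=
  \sum_(i < N) \sum_(j < N | (i < j)%N) m i * m j / dist_ij x i j.

(* U as an extended real: +oo at collisions (the natural value of the sum) *)
Definition UpotE (x : config R N d) : \bar R :=
  if `[< Omega x >] then (Upot x)%:E else +oo%E.

(* Gradient of U with respect to the mass inner product, body i, coordinate k:
   (grad U)_i = (1/m_i) dU/dx_i = sum_{j<>i} m_j (x_j - x_i) / |x_i - x_j|^3 *)
Definition gradU (x : config R N d) (i : 'I_N) (k : 'I_d) : R :=
  \sum_(j < N | j != i) m j * (x j k - x i k) / (dist_ij x i j) ^+ 3.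

Definition vel (g : R -> config R N d) (t : R) : config R N d :=
  fun i k => derive1 (fun s => g s i k) t.

Definition acc (g : R -> config R N d) (t : R) : config R N d :=
  fun i k => derive1 (derive1 (fun s => g s i k)) t.

Definition abs_cont_on (f : R -> R) (a b : R) : Prop :=
  forall e : R, 0 < e -> exists2 del : R, 0 < del &
    forall (n : nat) (ak bk : nat -> R),
      (forall k, (k < n)%N -> a <= ak k /\ ak k <= bk k /\ bk k <= b) ->
      (forall k l, (k < l)%N -> (l < n)%N -> bk k <= ak l) ->
      \sum_(k < n) (bk k - ak k) < del ->
      \sum_(k < n) `|f (bk k) - f (ak k)| < e.

Definition AC_curve (g : R -> config R N d) (a b : R) : Prop :=
  forall i k, abs_cont_on (fun t => g t i k) a b.

Definition lagr_h (h : R) (x v : config R N d) : \bar R :=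
  ((mnorm v ^+ 2 / 2)%:E + UpotE x + h%:E)%E.

Definition action (h : R) (g : R -> config R N d) (a b : R) : \bar R :=
  (\int[@lebesgue_measure R]_(t in `[a, b]) lagr_h h (g t) (vel g t))%E.

Definition phi (h : R) (x y : config R N d) : \bar R :=
  ereal_inf [set A | exists a b (g : R -> config R N d),
     [/\ a < b, AC_curve g a b, g a = x, g b = y & A = action h g a b]].

Definition geodesic_ray (h : R) (g : R -> config R N d) : Prop :=
  0 <= h /\
  (forall t, 0 <= t -> Omega (g t)) /\
  (forall s t, 0 <= s -> s < t ->
     AC_curve g s t /\ action h g s t = phi h (g s) (g t)).

Definition newton_sol (g : R -> config R N d) (I : set R) : Prop :=
  forall t, I t ->
    Omega (g t) /\
    (forall i k, derivable (fun s => g s i k) t 1 /\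
                 derivable (derive1 (fun s => g s i k)) t 1) /\
    acc g t = gradU (g t).

Definition energy (x v : config R N d) : R := mnorm v ^+ 2 / 2 - Upot x.

(* GR: data (x,v) in T Omega whose maximal classical solution is a geodesic
   ray (of energy h = energy x v).  The maximal solution is defined on an open
   interval containing 0; it is a geodesic ray iff it is defined on some
   (-eps, oo) and its restriction to [0,oo) is a geodesic ray. *)
Definition GR : set (config R N d * config R N d) :=
  [set xv | Omega xv.1 /\
     exists2 eps : R, 0 < eps &
     exists g : R -> config R N d,
       [/\ g 0 = xv.1, vel g 0 = xv.2,
           newton_sol g [set t | - eps < t] &
           geodesic_ray (energy xv.1 xv.2) g]].

End NBody.

(* Main.v *)
Require Import Defs.
From HB Require Import structures.
From mathcomp Require Import all_boot all_order all_algebra.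
From mathcomp Require Import all_classical all_reals all_analysis.
Import Order.TTheory GRing.Theory Num.Theory.
Import numFieldNormedType.Exports.
Local Open Scope classical_set_scope.
Local Open Scope ring_scope.

Lemma sum_cvg_helper (R : realType) (n : nat) (f : 'I_n -> nat -> R) (a : 'I_n -> R) :
  (forall i, f i @ \oo --> a i) ->
  (fun t => \sum_(i < n) f i t) @ \oo --> \sum_(i < n) a i.
Proof.
move=> H.
have := @cvg_big R^o 'I_n +%R 0 (fun _ => true) _ nat \oo (index_enum 'I_n) (fun i t => f i t) a _ (fun i _ => H i).
by apply; exact: add_continuous.
Qed.

Lemma edot_ge0 (R : realType) (d : nat) (a : 'I_d -> R) : 0 <= edot a a.
Proof. by apply: sumr_ge0 => k _; rewrite -expr2 sqr_ge0. Qed.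

Lemma edot_gt0 (R : realType) (d : nat) (a : 'I_d -> R) : a != (fun _ => 0) -> 0 < edot a a.
Proof.
move=> ha; rewrite lt0r edot_ge0 andbT; apply/negP => /eqP.
move/eqP; rewrite /edot psumr_eq0 => [/allP H|k _]; last by rewrite -expr2 sqr_ge0.
apply/negP: ha; rewrite negbK; apply/eqP; apply: funext => k.
by have := H k (mem_index_enum _); rewrite /= -expr2 sqrf_eq0 => /eqP.
Qed.

Theorem lemma3p1 (R : realType) (N d : nat) (m : 'I_N -> R)
  (hd : (2 <= d)%N) (hm : forall i, 0 < m i)
  (xs vs : nat -> config R N d) (x0 v0 : config R N d) :
  (forall n, GR m (xs n, vs n)) ->
  (forall i k, (fun n => xs n i k) @ \oo --> x0 i k) ->
  (forall i k, (fun n => vs n i k) @ \oo --> v0 i k) ->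
  Omega x0.
Proof.
move=> HGR Hx Hv.
have mdot_ge0 : forall v : config R N d, 0 <= mdot m v v.
  by move=> v; apply: sumr_ge0 => i _; apply: mulr_ge0; [exact: ltW | exact: edot_ge0].
have HU : forall n, Upot m (xs n) <= mdot m (vs n) (vs n) / 2.
  move=> n; move: (HGR n); rewrite /GR /= => -[_ [eps _ [g [_ _ _ [h0 _]]]]].
  by move: h0; rewrite /energy /mnorm sqr_sqrtr ?mdot_ge0 //= subr_ge0.
have HO : forall n, Omega (xs n) by move=> n; move: (HGR n); rewrite /GR /= => -[].
have Cv : (fun n => mdot m (vs n) (vs n)) @ \oo --> mdot m v0 v0.
  apply: sum_cvg_helper => i; apply: cvgMl_tmp.
  apply: sum_cvg_helper => k; exact: cvgM.
set C := mdot m v0 v0 + 1.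
have C0 : 0 < C by rewrite /C ltr_wpDl ?mdot_ge0.
have key : forall a b : 'I_N, (a < b)%N -> x0 a = x0 b -> False.
  move=> a b ab eab.
  set e := fun n => edot (fun k => xs n a k - xs n b k) (fun k => xs n a k - xs n b k).
  have Ce : e @ \oo --> 0.
    have -> : 0 = edot (fun k => x0 a k - x0 b k) (fun k => x0 a k - x0 b k).
      by rewrite eab /edot big1 // => k _; rewrite subrr mulr0.
    apply: sum_cvg_helper => k; apply: cvgM; exact: cvgB.
  set mab := m a * m b.
  have mab0 : 0 < mab by rewrite mulr_gt0.
  set del := (mab * 2 / C) ^+ 2.
  have del0 : 0 < del by rewrite exprn_gt0 // divr_gt0 ?mulr_gt0.
  have E1 : \forall t \near \oo, e t < del by exact: (cvgr_lt _ Ce _ del0).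
  have E2 : \forall t \near \oo, mdot m (vs t) (vs t) < C.
    by apply: (cvgr_lt _ Cv); rewrite /C ltrDl.
  have [n [h1 h2]] : exists n, e n < del /\ mdot m (vs n) (vs n) < C.
    by have [M HM] := filter_ex (filterI E1 E2); exists M.
  have Hterm : mab / dist_ij (xs n) a b <= Upot m (xs n).
    rewrite /Upot (bigD1 a) //= (bigD1 b) //=.
    rewrite -addrA lerDl addr_ge0 //.
      by apply: sumr_ge0 => j _; apply: divr_ge0; [apply: mulr_ge0; exact: ltW | exact: sqrtr_ge0].
    apply: sumr_ge0 => i _; apply: sumr_ge0 => j _.
    by apply: divr_ge0; [apply: mulr_ge0; exact: ltW | exact: sqrtr_ge0].
  have dpos : 0 < dist_ij (xs n) a b.
    rewrite /dist_ij /enorm sqrtr_gt0 edot_gt0 //.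
    apply/negP => /eqP H0; have := HO n a b; rewrite neq_ltn ab => /(_ isT).
    apply/negP; rewrite negbK; apply/eqP; apply: funext => k.
    by apply/eqP; rewrite -subr_eq0; have := congr1 (fun f => f k) H0 => /= ->.
  have hd2 : dist_ij (xs n) a b ^+ 2 = e n by rewrite /dist_ij /enorm sqr_sqrtr ?edot_ge0.
  have : mab / dist_ij (xs n) a b < C / 2.
    by apply: (le_lt_trans Hterm); apply: (le_lt_trans (HU n)); rewrite ltr_pM2r.
  rewrite ltr_pdivrMr // => h3.
  have h4 : mab * 2 / C < dist_ij (xs n) a b.
    have h3' : mab * 2 < C * dist_ij (xs n) a b by rewrite -ltr_pdivlMr // (mulrAC C).
    rewrite ltr_pdivrMr //.
    by rewrite [X in _ < X]mulrC.
  have : del < e n.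
    by rewrite /del -hd2 ltr_pXn2r // ?nnegrE ?ltW // divr_gt0 ?mulr_gt0.
  by rewrite ltNge ltW.
move=> i j ij; apply/negP => /eqP eij.
move: ij; rewrite neq_ltn => /orP[] h.
  exact: key h eij.
exact: key h (esym eij).
Qed.
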